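(* Let $\sigma\in\operatorname{Hom}(\pi_1(M),\mathrm{SU}(2))$, let $(x,y,z)=(\operatorname{tr}\sigma(X),\operatorname{tr}\sigma(Y),\operatorname{tr}\sigma(XY))$ and $k=\operatorname{tr}\sigma(K)$. Then $[\sigma]$ is a $\mathrm{Pin}(2)$ representation class but not a $\mathrm{Spin}(2)$ representation class if and only if $k\ne 2$ and at least two of $x,y,z$ are zero.
   Context: $M$ is a torus with one boundary component; $\pi_1(M)$ is the free group on $X,Y$ and $K=XYX^{-1}Y^{-1}$. One has $k=x^2+y^2+z^2-xyz-2$. Use the quaternionic model of $\mathrm{SU}(2)$: $1,\mathrm{i},\mathrm{j},\mathrm{k}$ denote the matrices $\begin{pmatrix}1&0\\0&1\end{pmatrix},\begin{pmatrix}i&0\\0&-i\end{pmatrix},\begin{pmatrix}0&1\\-1&0\end{pmatrix},\begin{pmatrix}0&i\\i&0\end{pmatrix}$. Set $\mathrm{Spin}(2)=\{\cos\theta+\sin\theta\,\mathrm{j}\}$, $\mathrm{Spin}_-(2)=\{\cos\theta\,\mathrm{k}+\sin\theta\,\mathrm{i}\}$, $\mathrm{Pin}(2)=\mathrm{Spin}(2)\cup\mathrm{Spin}_-(2)$ (the preimage of $\mathrm{O}(2)$ under $\mathrm{SU}(2)\to\mathrm{SO}(3)$). For a subgroup $G\subset\mathrm{SU}(2)$, a class $[\sigma]\in E=\operatorname{Hom}(\pi_1(M),\mathrm{SU}(2))/\mathrm{SU}(2)$ is a $G$ representation class if some representative of $[\sigma]$ takes values in $G$ (equivalently $\sigma(\pi_1(M))$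 lies in a conjugate of $G$). Classes are determined by their trace coordinates $(x,y,z)$. *)

(* Defs.v *)
From HB Require Import structures.
From mathcomp Require Import all_boot all_order all_algebra.
From mathcomp Require Import complex.
From mathcomp Require Import reals trigo.
Set Implicit Arguments. Unset Strict Implicit. Unset Printing Implicit Defensive.
Import Order.TTheory GRing.Theory Num.Theory.
Local Open Scope ring_scope.
Local Open Scope complex_scope.

Section SU2.
Variable R : realType.
Local Notation C := R[i].

Definition adjmx (A : 'M[C]_2) : 'M[C]_2 := (map_mx Num.conj A)^T.

Definition SU2 : pred 'M[C]_2 :=
  fun A => (A *m adjmx A == 1%:M) && (\det A == 1).

Definition qI : 'M[C]_2 := \matrix_(a < 2, b < 2)
  (if (a == b) then (if a == 0 :> nat then 'i else - 'i) else 0).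
Definition qJ : 'M[C]_2 := \matrix_(a < 2, b < 2)
  (if (a == b) then 0 else (if a == 0 :> nat then 1 else -1)).
Definition qK : 'M[C]_2 := \matrix_(a < 2, b < 2)
  (if (a == b) then 0 else 'i).

Definition Spin2 (A : 'M[C]_2) : Prop :=
  exists t : R, A = (cos t)%:C%:M + (sin t)%:C *: qJ.
Definition Spinm2 (A : 'M[C]_2) : Prop :=
  exists t : R, A = (cos t)%:C *: qK + (sin t)%:C *: qI.
Definition Pin2 (A : 'M[C]_2) : Prop := Spin2 A \/ Spinm2 A.

(* Words in the free group pi_1(M) = F(X, Y) *)
Inductive word := wX | wY | w1 | wmul of word & word | winv of word.

(* A homomorphism pi_1(M) -> SU(2) is determined by the images A, B of X, Y
   (any pair in SU(2) gives one); evaluate it on a word. *)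
Fixpoint rep_eval (A B : 'M[C]_2) (w : word) : 'M[C]_2 :=
  match w with
  | wX => A | wY => B | w1 => 1%:M
  | wmul u v => rep_eval A B u *m rep_eval A B v
  | winv u => invmx (rep_eval A B u)
  end.

Definition rep_class_in (G : 'M[C]_2 -> Prop) (A B : 'M[C]_2) : Prop :=
  exists g, SU2 g /\ forall w, G (g *m rep_eval A B w *m invmx g).

Definition wK : word := wmul (wmul wX wY) (wmul (winv wX) (winv wY)).

End SU2.

(* Main.v *)
Require Import Defs.
From HB Require Import structures.
From mathcomp Require Import all_boot all_order all_algebra.
From mathcomp Require Import complex.
From mathcomp Require Import reals trigo.
From mathcomp Require Import ring lra.
Import Order.TTheory GRing.Theory Num.Theory.
Local Open Scope ring_scope.
Local Open Scope complex_scope.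

Section Q.
Variable R : realType.
Record quat := Qt { qa : R; qb : R; qc : R; qd : R }.
Definition qmul (p q : quat) :=
  let: Qt a b c d := p in let: Qt a' b' c' d' := q in
  Qt (a*a' - b*b' - c*c' - d*d') (a*b' + b*a' + c*d' - d*c')
     (a*c' - b*d' + c*a' + d*b') (a*d' + b*c' - c*b' + d*a').
Definition qconj (p : quat) := let: Qt a b c d := p in Qt a (-b) (-c) (-d).
Definition qn (p : quat) := let: Qt a b c d := p in a^+2 + b^+2 + c^+2 + d^+2.
Definition q1 := Qt 1 0 0 0.
Definition qscale (l : R) (p : quat) := let: Qt a b c d := p in Qt (l*a) (l*b) (l*c) (l*d).
Definition conjq h v := qmul (qmul h v) (qconj h).
Definition comm p q := qmul (qmul p q) (qmul (qconj p) (qconj q)).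
Definition SpinQ v := qb v = 0 /\ qd v = 0.
Definition SpinmQ v := qa v = 0 /\ qc v = 0.
Definition PinQ v := SpinQ v \/ SpinmQ v.

Lemma qnM p q : qn (qmul p q) = qn p * qn q.
Proof. case: p q => a b c d [a' b' c' d'] /=; ring. Qed.
Lemma qnC p : qn (qconj p) = qn p.
Proof. case: p => a b c d /=; ring. Qed.
Lemma qmulA p q r : qmul (qmul p q) r = qmul p (qmul q r).
Proof. case: p q r => a b c d [a' b' c' d'] [a'' b'' c'' d''] /=; congr Qt; ring. Qed.
Lemma qconjM p q : qconj (qmul p q) = qmul (qconj q) (qconj p).
Proof. case: p q => a b c d [a' b' c' d'] /=; congr Qt; ring. Qed.
Lemma qconjK p : qconj (qconj p) = p.
Proof. case: p => a b c d /=; congr Qt; ring. Qed.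
Lemma qmul1 p : qmul p q1 = p.
Proof. case: p => a b c d /=; congr Qt; ring. Qed.
Lemma q1mul p : qmul q1 p = p.
Proof. case: p => a b c d /=; congr Qt; ring. Qed.
Lemma qmulC1 p : qn p = 1 -> qmul p (qconj p) = q1.
Proof. case: p => a b c d /= hn; rewrite /q1 -hn; congr Qt; ring. Qed.
Lemma qmulC1' p : qn p = 1 -> qmul (qconj p) p = q1.
Proof. case: p => a b c d /= hn; rewrite /q1 -hn; congr Qt; ring. Qed.
Lemma qscale1 p : qscale 1 p = p.
Proof. case: p => a b c d /=; congr Qt; ring. Qed.

Lemma conjq_mul h u v : qn h = 1 -> conjq h (qmul u v) = qmul (conjq h u) (conjq h v).
Proof.
move=> hn; rewrite /conjq.
have -> : qmul (qmul (qmul h u) (qconj h)) (qmul (qmul h v) (qconj h)) =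
  qmul (qmul (qmul h u) (qmul (qconj h) h)) (qmul v (qconj h)) by rewrite !qmulA.
by rewrite qmulC1' // qmul1 !qmulA.
Qed.
Lemma conjq_conj h v : conjq h (qconj v) = qconj (conjq h v).
Proof. by rewrite /conjq !qconjM qconjK qmulA. Qed.
Lemma conjq_q1 h : qn h = 1 -> conjq h q1 = q1.
Proof. by move=> hn; rewrite /conjq qmul1 qmulC1. Qed.
Lemma qa_conjq h v : qa (conjq h v) = qn h * qa v.
Proof. case: h v => a b c d [a' b' c' d'] /=; ring. Qed.
Lemma qn_conjq h v : qn (conjq h v) = qn h ^+ 2 * qn v.
Proof. by rewrite /conjq !qnM qnC; ring. Qed.
Lemma conjq_comp r h v : conjq (qmul r h) v = conjq r (conjq h v).
Proof. by rewrite /conjq qconjM !qmulA. Qed.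
Lemma conjq_scale l h v : conjq (qscale l h) v = qscale (l^+2) (conjq h v).
Proof. case: h v => a b c d [a' b' c' d'] /=; congr Qt; ring. Qed.
Lemma qn_scale l h : qn (qscale l h) = l^+2 * qn h.
Proof. case: h => a b c d /=; ring. Qed.
Lemma conjq1 v : conjq q1 v = v.
Proof. case: v => a b c d /=; congr Qt; ring. Qed.
Lemma conjq_comm h p q : qn h = 1 -> conjq h (comm p q) = comm (conjq h p) (conjq h q).
Proof. by move=> hn; rewrite /comm !conjq_mul // !conjq_conj. Qed.

Lemma SpinM u v : SpinQ u -> SpinQ v -> SpinQ (qmul u v).
Proof. case: u v => a b c d [a' b' c' d'] [/= -> ->] [/= -> ->]; rewrite /SpinQ /SpinmQ /=; split; ring. Qed.
Lemma SpinC u : SpinQ u -> SpinQ (qconj u).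
Proof. case: u => a b c d [/= -> ->]; rewrite /SpinQ /SpinmQ /=; split; ring. Qed.
Lemma SpinmC u : SpinmQ u -> SpinmQ (qconj u).
Proof. case: u => a b c d [/= -> ->]; rewrite /SpinQ /SpinmQ /=; split; ring. Qed.
Lemma SpinmM u v : SpinmQ u -> SpinmQ v -> SpinQ (qmul u v).
Proof. case: u v => a b c d [a' b' c' d'] [/= -> ->] [/= -> ->]; rewrite /SpinQ /SpinmQ /=; split; ring. Qed.
Lemma SpinSpinm u v : SpinQ u -> SpinmQ v -> SpinmQ (qmul u v).
Proof. case: u v => a b c d [a' b' c' d'] [/= -> ->] [/= -> ->]; rewrite /SpinQ /SpinmQ /=; split; ring. Qed.
Lemma SpinmSpin u v : SpinmQ u -> SpinQ v -> SpinmQ (qmul u v).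
Proof. case: u v => a b c d [a' b' c' d'] [/= -> ->] [/= -> ->]; rewrite /SpinQ /SpinmQ /=; split; ring. Qed.
Lemma PinM u v : PinQ u -> PinQ v -> PinQ (qmul u v).
Proof.
case=> hu [] hv; [left; exact: SpinM | right; exact: SpinSpinm
  | right; exact: SpinmSpin | left; exact: SpinmM].
Qed.
Lemma PinC u : PinQ u -> PinQ (qconj u).
Proof. by case=> h; [left; exact: SpinC | right; exact: SpinmC]. Qed.
Lemma Spin1 : SpinQ q1. Proof. by split. Qed.
Lemma Pin1 : PinQ q1. Proof. by left; split. Qed.

Fixpoint qeval p q (w : word) : quat :=
  match w with
  | wX => p | wY => q | w1 => q1
  | wmul u v => qmul (qeval p q u) (qeval p q v)
  | winv u => qconj (qeval p q u)
  end.

Lemma class_all (P : quat -> Prop) p q :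
  (forall u v, P u -> P v -> P (qmul u v)) -> (forall u, P u -> P (qconj u)) -> P q1 ->
  P p -> P q -> forall w, P (qeval p q w).
Proof. by move=> hM hC h1 hp hq; elim=> /=; auto. Qed.

Lemma conjq_eval h p q w : qn h = 1 ->
  conjq h (qeval p q w) = qeval (conjq h p) (conjq h q) w.
Proof.
move=> hn; elim: w => //=; first exact: conjq_q1.
  by move=> u IHu v IHv; rewrite conjq_mul // IHu IHv.
by move=> u IHu; rewrite conjq_conj IHu.
Qed.

Lemma qn_eval p q w : qn p = 1 -> qn q = 1 -> qn (qeval p q w) = 1.
Proof.
move=> hp hq; elim: w => //=.
- by rewrite /= expr1n expr0n /= !addr0.
- by move=> u IHu v IHv; rewrite qnM IHu IHv mulr1.
- by move=> u IHu; rewrite qnC.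
Qed.

Lemma comm_pure p r : qa p = 0 -> qa r = 0 ->
  qa (comm p r) = qn p * qn r - 2 * (qb (qmul p r) ^+ 2 + qc (qmul p r) ^+ 2 + qd (qmul p r) ^+ 2).
Proof. case: p r => a b c d [a' b' c' d'] /= -> ->; ring. Qed.

Lemma dot_pure_l p r : qa p = 0 -> qa r = 0 ->
  qb (qmul p r) * qb p + qc (qmul p r) * qc p + qd (qmul p r) * qd p = 0.
Proof. case: p r => a b c d [a' b' c' d'] /= -> ->; ring. Qed.
Lemma dot_pure_r p r : qa p = 0 -> qa r = 0 ->
  qb (qmul p r) * qb r + qc (qmul p r) * qc r + qd (qmul p r) * qd r = 0.
Proof. case: p r => a b c d [a' b' c' d'] /= -> ->; ring. Qed.

Lemma rot_c x y z s v : qa v = 0 ->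
  qc (conjq (Qt 0 x (y + s) z) v) =
  2 * (x * qb v + y * qc v + z * qd v) * (y + s) + qc v * (s ^+ 2 - (x ^+ 2 + y ^+ 2 + z ^+ 2)).
Proof. case: v => a b c d /= ->; ring. Qed.

Lemma Spinm_scale l v : SpinmQ v -> SpinmQ (qscale l v).
Proof. case: v => a b c d [/= -> ->]; rewrite /SpinmQ /=; split; ring. Qed.
Lemma Spin_scale l v : SpinQ v -> SpinQ (qscale l v).
Proof. case: v => a b c d [/= -> ->]; rewrite /SpinQ /=; split; ring. Qed.

Lemma core p r : qa p = 0 -> qa r = 0 -> qn p = 1 -> qn r = 1 -> qa (comm p r) != 1 ->
  exists h, qn h = 1 /\ SpinmQ (conjq h p) /\ SpinmQ (conjq h r).
Proof.
move=> pa ra pn rn hk.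
set wb := qb (qmul p r); set wc := qc (qmul p r); set wd := qd (qmul p r).
set W := wb ^+ 2 + wc ^+ 2 + wd ^+ 2.
have W0 : W != 0.
  apply: contra hk => /eqP W0; apply/eqP.
  by rewrite comm_pure // pn rn -/wb -/wc -/wd -/W W0; ring.
have Wp : 0 < W.
  by rewrite lt_def W0 /W; apply: addr_ge0; [apply: addr_ge0|]; apply: sqr_ge0.
pose s := if 0 <= wc then Num.sqrt W else - Num.sqrt W.
have s2 : s ^+ 2 = W.
  by rewrite /s; case: ifP => _; rewrite ?sqrrN sqr_sqrtr // ltW.
have swc : 0 <= s * wc.
  rewrite /s; case: ifP => h.
    by apply: mulr_ge0 => //; apply: sqrtr_ge0.
  by rewrite mulNr -mulrN; apply: mulr_ge0; [apply: sqrtr_ge0| rewrite oppr_ge0 ltW // ltNge h].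
pose h0 := Qt 0 wb (wc + s) wd.
have N0 : 0 < qn h0.
  have -> : qn h0 = 2 * W + 2 * (s * wc) + (s ^+ 2 - W) by rewrite /= /W; ring.
  rewrite s2 subrr addr0; apply: ltr_wpDr; first by rewrite mulr_ge0.
  by rewrite mulr_gt0.
pose l := (Num.sqrt (qn h0))^-1.
have l2 : l ^+ 2 * qn h0 = 1.
  by rewrite /l exprVn sqr_sqrtr ?ltW // mulVf // gt_eqF.
have key : forall v, qa v = 0 -> qb (qmul p r) * qb v + qc (qmul p r) * qc v + qd (qmul p r) * qd v = 0 ->
    SpinmQ (conjq (qscale l h0) v).
  move=> v va vd; rewrite conjq_scale; apply: Spinm_scale; split.
    by rewrite qa_conjq va mulr0.
  by rewrite /h0 rot_c // -/wb -/wc -/wd in vd *; rewrite vd s2 /W subrr; ring.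
exists (qscale l h0); split; first by rewrite qn_scale.
split; apply: key => //.
- by rewrite -(dot_pure_l p r pa ra).
- by rewrite -(dot_pure_r p r pa ra).
Qed.

Definition rj b d := qscale (Num.sqrt 2)^-1 (Qt 0 b 1 d).
Lemma qn_rj b d : b^+2 + d^+2 = 1 -> qn (rj b d) = 1.
Proof.
move=> h; rewrite qn_scale /= exprVn sqr_sqrtr ?ler0n //.
have -> : 0 ^+ 2 + b ^+ 2 + 1 ^+ 2 + d ^+ 2 = 2 :> R by move: h; nra.
by rewrite mulVf // pnatr_eq0.
Qed.
Lemma Spin_rj b d v : SpinQ (conjq (Qt 0 b 1 d) v) -> SpinQ (conjq (rj b d) v).
Proof. by move=> h; rewrite conjq_scale; apply: Spin_scale. Qed.

Lemma fwd p q : qn p = 1 -> qn q = 1 -> PinQ p -> PinQ q ->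
  ~ (exists r, qn r = 1 /\ SpinQ (conjq r p) /\ SpinQ (conjq r q)) ->
  qa (comm p q) != 1 /\
  ((qa p == 0) && (qa q == 0) \/ (qa p == 0) && (qa (qmul p q) == 0) \/
   (qa q == 0) && (qa (qmul p q) == 0)).
Proof.
case: p => a b c d; case: q => a' b' c' d'.
rewrite /PinQ /SpinQ /SpinmQ /= => hp hq.
case=> [[hb hd]|[ha hc]]; case=> [[hb' hd']|[ha' hc']] hns; subst.
- exfalso; apply: hns; exists q1; split; first by rewrite /=; ring.
  by rewrite !conjq1.
-
  have hq' : b' ^+ 2 + d' ^+ 2 = 1 by rewrite -hq; ring.
  split; last by right; right; rewrite eqxx /=; apply/eqP; ring.
  apply/negP => /eqP hk.
  have e : (a ^+ 2 - c ^+ 2) * (b' ^+ 2 + d' ^+ 2) = 1 by rewrite -hk /=; ring.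
  rewrite hq' mulr1 in e.
  have c2 : c ^+ 2 = 0 by nra.
  move/eqP: c2; rewrite sqrf_eq0 => /eqP c0; subst c.
  apply: hns; exists (rj b' d'); split; first exact: qn_rj.
  split; apply: Spin_rj; rewrite /SpinQ /=; split.
  + ring.
  + ring.
  + by transitivity (b' * (b'^+2 + d'^+2 - 1)); [ring | rewrite hq' subrr mulr0].
  + by transitivity (d' * (b'^+2 + d'^+2 - 1)); [ring | rewrite hq' subrr mulr0].
-
  have hp' : b ^+ 2 + d ^+ 2 = 1 by rewrite -hp; ring.
  split; last by right; left; rewrite eqxx /=; apply/eqP; ring.
  apply/negP => /eqP hk.
  have e : (a' ^+ 2 - c' ^+ 2) * (b ^+ 2 + d ^+ 2) = 1 by rewrite -hk /=; ring.
  rewrite hp' mulr1 in e.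
  have c2 : c' ^+ 2 = 0 by nra.
  move/eqP: c2; rewrite sqrf_eq0 => /eqP c0; subst c'.
  apply: hns; exists (rj b d); split; first exact: qn_rj.
  split; apply: Spin_rj; rewrite /SpinQ /=; split.
  + by transitivity (b * (b^+2 + d^+2 - 1)); [ring | rewrite hp' subrr mulr0].
  + by transitivity (d * (b^+2 + d^+2 - 1)); [ring | rewrite hp' subrr mulr0].
  + ring.
  + ring.
-
  have hp' : b ^+ 2 + d ^+ 2 = 1 by rewrite -hp; ring.
  have hq' : b' ^+ 2 + d' ^+ 2 = 1 by rewrite -hq; ring.
  split; last by left; rewrite eqxx.
  apply/negP => /eqP hk.
  have e : (b * b' + d * d') ^+ 2 - (d * b' - b * d') ^+ 2 = 1 by rewrite -hk /=; ring.
  have e2 : (b * b' + d * d') ^+ 2 + (d * b' - b * d') ^+ 2 = 1.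
    by transitivity ((b ^+ 2 + d ^+ 2) * (b' ^+ 2 + d' ^+ 2)); [ring | rewrite hp' hq' mulr1].
  have g2 : (d * b' - b * d') ^+ 2 = 0 by lra.
  move/eqP: g2; rewrite sqrf_eq0 subr_eq0 => /eqP g0.
  apply: hns; exists (rj b d); split; first exact: qn_rj.
  split; apply: Spin_rj; rewrite /SpinQ /=; split.
  + by transitivity (b * (b^+2 + d^+2 - 1)); [ring | rewrite hp' subrr mulr0].
  + by transitivity (d * (b^+2 + d^+2 - 1)); [ring | rewrite hp' subrr mulr0].
  + transitivity ((b^+2 + d^+2 - 1) * b' + 2 * d * (b * d' - d * b')); first ring.
    by rewrite hp' g0 !subrr; ring.
  + transitivity ((b^+2 + d^+2 - 1) * d' + 2 * b * (d * b' - b * d')); first ring.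
    by rewrite hp' g0 !subrr; ring.
Qed.

Lemma comm_spin u v : SpinQ u -> SpinQ v -> qa (comm u v) = qn u * qn v.
Proof. case: u v => a b c d [a' b' c' d'] [/= -> ->] [/= -> ->]; ring. Qed.

Lemma bwd p q : qn p = 1 -> qn q = 1 -> qa (comm p q) != 1 ->
  ((qa p == 0) && (qa q == 0) \/ (qa p == 0) && (qa (qmul p q) == 0) \/
   (qa q == 0) && (qa (qmul p q) == 0)) ->
  (exists h, qn h = 1 /\ PinQ (conjq h p) /\ PinQ (conjq h q)) /\
  ~ (exists h, qn h = 1 /\ SpinQ (conjq h p) /\ SpinQ (conjq h q)).
Proof.
move=> pn qn' hk hd; split; last first.
  case=> h [hn [sp sq]]; move/eqP: hk; apply.
  have := qa_conjq h (comm p q); rewrite hn mul1r => <-.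
  by rewrite conjq_comm // comm_spin // !qn_conjq hn pn qn'; ring.
case: hd => [/andP[/eqP pa /eqP qa0]|[/andP[/eqP pa /eqP pqa]|/andP[/eqP qa0 /eqP pqa]]].
- have [h [hn [s1 s2]]] := core p q pa qa0 pn qn' hk.
  by exists h; split => //; split; right.
- have rn : qn (qmul p q) = 1 by rewrite qnM pn qn' mulr1.
  have hk' : qa (comm p (qmul p q)) != 1.
    have -> : comm p (qmul p q) = conjq p (comm p q) by rewrite /comm /conjq qconjM !qmulA.
    by rewrite qa_conjq pn mul1r.
  have [h [hn [s1 s2]]] := core p (qmul p q) pa pqa pn rn hk'.
  exists h; split => //; split; first by right.
  have <- : qmul (qconj p) (qmul p q) = q by rewrite -qmulA qmulC1' // q1mul.
  by left; rewrite conjq_mul // conjq_conj; apply: SpinmM => //; apply: SpinmC.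
- have rn : qn (qmul p q) = 1 by rewrite qnM pn qn' mulr1.
  have hk' : qa (comm (qmul p q) q) != 1.
    have -> : comm (qmul p q) q = qmul (qmul p q) (qmul (qmul q (qconj q)) (qmul (qconj p) (qconj q))).
      by rewrite /comm qconjM !qmulA.
    by rewrite qmulC1 // q1mul.
  have [h [hn [s1 s2]]] := core (qmul p q) q pqa qa0 rn qn' hk'.
  exists h; split => //; split; last by right.
  have <- : qmul (qmul p q) (qconj q) = p by rewrite qmulA qmulC1 // qmul1.
  by left; rewrite conjq_mul // conjq_conj; apply: SpinmM => //; apply: SpinmC.
Qed.

Definition Qm (p : quat) : 'M[R[i]]_2 :=
  let: Qt a b c d := p in
  \matrix_(i < 2, j < 2)
   (if i == 0 :> nat then (if j == 0 :> nat then a +i* b else c +i* d)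
    else (if j == 0 :> nat then (-c) +i* d else a +i* (-b))).

Lemma ord2P (i : 'I_2) : i = 0 \/ i = 1.
Proof. by case: i => [[|[|//]] ?]; [left|right]; apply/val_inj. Qed.

Lemma QmM p q : Qm (qmul p q) = Qm p *m Qm q.
Proof.
case: p q => a b c d [a' b' c' d'].
apply/matrixP => i j; rewrite !mxE !big_ord_recl !big_ord0 !mxE /=.
case: i => [[|[|//]] ?]; case: j => [[|[|//]] ?] /=; simpc; congr (_ +i* _); ring.
Qed.

Lemma Qm1 : Qm (Qt 1 0 0 0) = 1%:M.
Proof.
apply/matrixP => i j; rewrite !mxE.
by case: (ord2P i) => ->; case: (ord2P j) => -> /=; simpc.
Qed.


Lemma QmV p : qn p = 1 -> invmx (Qm p) = Qm (qconj p).
Proof.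
move=> hp; have h1 : Qm p *m Qm (qconj p) = 1%:M by rewrite -QmM qmulC1 // Qm1.
have [hu _] := mulmx1_unit h1.
by rewrite -[RHS](mulKmx hu) h1 mulmx1.
Qed.

Lemma detQm p : \det (Qm p) = (qn p)%:C.
Proof.
case: p => a b c d.
rewrite (expand_det_row _ 0) !big_ord_recl big_ord0 /cofactor !det_mx11 !mxE /=.
simpc; rewrite -complexr0; congr (_ +i* _); ring.
Qed.

Lemma adjQm p : adjmx (Qm p) = Qm (qconj p).
Proof.
case: p => a b c d.
apply/matrixP => i j; rewrite !mxE.
case: (ord2P i) => ->; case: (ord2P j) => -> /=; simpc.
all: by rewrite (_ : forall x : R[i], Num.conj x = conjc x) // /= ?opprK.
Qed.

Lemma SU2Qm p : qn p = 1 -> SU2 (Qm p).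
Proof.
move=> hp; apply/andP; split.
  by rewrite adjQm -QmM qmulC1 // Qm1.
by rewrite detQm hp.
Qed.

Lemma trQm p : \tr (Qm p) = (qa p *+ 2)%:C.
Proof.
case: p => a b c d; rewrite /mxtrace !big_ord_recl big_ord0 !mxE /=.
simpc; rewrite -complexr0; congr (_ +i* _); ring.
Qed.

Lemma circ (c s : R) : c^+2 + s^+2 = 1 -> exists t, cos t = c /\ sin t = s.
Proof.
move=> h.
have hc : -1 <= c <= 1 by apply/andP; split; nra.
have hs : sin (acos c) = `|s|.
  by rewrite sin_acos // -sqrtr_sqr; congr Num.sqrt; rewrite -h; ring.
case: (lerP 0 s) => s0.
  by exists (acos c); rewrite acosK ?in_itv //= hs ger0_norm.
by exists (- acos c); rewrite cosN sinN acosK ?in_itv //= hs ltr0_norm ?opprK.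
Qed.

Lemma Qm_inj p q : Qm p = Qm q -> p = q.
Proof.
case: p q => a b c d [a' b' c' d'] /matrixP h.
move: (h 0 0) (h 0 1); rewrite !mxE /= => -[-> ->] [-> ->] //.
Qed.

Lemma spinE t : (cos t)%:C%:M + (sin t)%:C *: qJ R = Qm (Qt (cos t) 0 (sin t) 0).
Proof.
apply/matrixP => i j; rewrite !mxE.
case: (ord2P i) => ->; case: (ord2P j) => -> /=; simpc; rewrite ?mulr1 ?mulr0 ?addr0 ?add0r //.
Qed.

Lemma spinmE t : (cos t)%:C *: qK R + (sin t)%:C *: qI R = Qm (Qt 0 (sin t) 0 (cos t)).
Proof.
apply/matrixP => i j; rewrite !mxE.
case: (ord2P i) => ->; case: (ord2P j) => -> /=; simpc; rewrite ?mulr1 ?mulr0 ?addr0 ?add0r //.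
Qed.

Lemma Spin2Q v : qn v = 1 -> Spin2 (Qm v) <-> (qb v = 0 /\ qd v = 0).
Proof.
case: v => a b c d hn; rewrite /= in hn; split.
case=> t; rewrite spinE => /Qm_inj; case=> _ -> _ -> //.
move=> [/= hb hd]; subst b d.
have [t [ht1 ht2]] : exists t, cos t = a /\ sin t = c by apply: circ; lra.
by exists t; rewrite spinE ht1 ht2.
Qed.

Lemma Spinm2Q v : qn v = 1 -> Spinm2 (Qm v) <-> (qa v = 0 /\ qc v = 0).
Proof.
case: v => a b c d hn; rewrite /= in hn; split.
  case=> t; rewrite spinmE => /Qm_inj; case=> -> _ -> _ //.
move=> [/= hb hd]; subst a c.
have [t [ht1 ht2]] : exists t, cos t = d /\ sin t = b by apply: circ; lra.
by exists t; rewrite spinmE ht1 ht2.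
Qed.


Lemma SU2_Qm (A : 'M[R[i]]_2) : SU2 A -> exists p, qn p = 1 /\ A = Qm p.
Proof.
case/andP => /eqP hU /eqP hd.
have cE : forall x : R[i], Num.conj x = conjc x by [].
have e00 : (A *m adjmx A) 0 0 = (1%:M : 'M[R[i]]_2) 0 0 by rewrite hU.
have e10 : (A *m adjmx A) 1 0 = (1%:M : 'M[R[i]]_2) 1 0 by rewrite hU.
move: e00 e10; rewrite /= !mxE !big_ord_recl !big_ord0 !mxE /= !cE !addr0.
move=> e00 e10.
move: hd; rewrite (expand_det_row _ 0) !big_ord_recl big_ord0 /cofactor !det_mx11 !mxE /=.
rewrite !addr0 expr0 mul1r !mulN1r !mulrN.
have l1 : lift ord0 ord0 = 1 :> 'I_2 by apply/val_inj.
have l0 : lift (lift ord0 ord0) ord0 = 0 :> 'I_2 by apply/val_inj.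
have o0 : ord0 = 0 :> 'I_2 by apply/val_inj.
rewrite ?l0 ?l1 ?o0 => hd; rewrite ?l0 ?l1 ?o0 in e00 e10.
set al := A 0 0 in e00 e10 hd; set be := A 0 1 in e00 e10 hd; set ga := A 1 0 in e00 e10 hd;
set de := A 1 1 in e00 e10 hd.
have hde : de = conjc al.
  apply/eqP; rewrite eq_sym -subr_eq0; apply/eqP.
  have -> : conjc al - de = -(conjc al*((al*de - be*ga) - 1)) + de*((al*conjc al + be*conjc be) - 1) - be*(ga*conjc al + de*conjc be) by ring.
  by rewrite hd e00 e10 !subrr !mulr0 oppr0 ?subr0 ?addr0.
have hga : ga = - conjc be.
  apply/eqP; rewrite -subr_eq0 opprK; apply/eqP.
  have -> : ga + conjc be = -(conjc be*((al*de - be*ga) - 1)) - ga*((al*conjc al + be*conjc be) - 1) + al*(ga*conjc al + de*conjc be) by ring.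
  by rewrite hd e00 e10 !subrr !mulr0 oppr0 ?subr0 ?addr0.
have hA : A = Qm (Qt (complex.Re al) (complex.Im al) (complex.Re be) (complex.Im be)).
  apply/matrixP => i j; rewrite [RHS]mxE.
  case: (ord2P i) => ->; case: (ord2P j) => -> /=.
  - by rewrite -/al; case: (al).
  - by rewrite -/be; case: (be).
  - by rewrite -/ga hga; case: (be) => x y /=; simpc.
  - by rewrite -/de hde; case: (al) => x y /=; simpc.
exists (Qt (complex.Re al) (complex.Im al) (complex.Re be) (complex.Im be)); split => //.
clearbody al be; clear -e00; move: e00; case: al => a b; case: be => c d /=; simpc.
move=> /eqP; rewrite eq_complex /= => /andP[/eqP h _].
by rewrite -h; ring.
Qed.

Lemma trz (r : R) : (((r *+ 2)%:C : R[i]) == 0) = (r == 0).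
Proof. by rewrite fmorph_eq0 mulrn_eq0. Qed.
Lemma trk (r : R) : (((r *+ 2)%:C : R[i]) == 2) = (r == 1).
Proof.
rewrite -(rmorph_nat (real_complex R) 2) fmorph_eq.
by apply/eqP/eqP => h; lra.
Qed.

Lemma rep_evalQ p q w : qn p = 1 -> qn q = 1 ->
  rep_eval (Qm p) (Qm q) w = Qm (qeval p q w).
Proof.
move=> pn qn'; elim: w => //=.
- exact: (esym Qm1).
- by move=> u IHu v IHv; rewrite IHu IHv QmM.
- by move=> u IHu; rewrite IHu QmV // qn_eval.
Qed.

Lemma conjQm h v : qn h = 1 -> Qm h *m Qm v *m invmx (Qm h) = Qm (conjq h v).
Proof. by move=> hn; rewrite QmV // /conjq !QmM. Qed.

Lemma Pin2Q v : qn v = 1 -> Pin2 (Qm v) <-> PinQ v.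
Proof.
move=> hn; rewrite /Pin2 /PinQ Spin2Q // Spinm2Q //.
Qed.

Lemma unit_conj h v : qn h = 1 -> qn v = 1 -> qn (conjq h v) = 1.
Proof. by move=> hn vn; rewrite qn_conjq hn vn; ring. Qed.

Lemma classQ (G : 'M[R[i]]_2 -> Prop) (P : quat -> Prop) p q : qn p = 1 -> qn q = 1 ->
  (forall v, qn v = 1 -> G (Qm v) <-> P v) ->
  (forall u v, P u -> P v -> P (qmul u v)) -> (forall u, P u -> P (qconj u)) -> P q1 ->
  rep_class_in G (Qm p) (Qm q) <-> exists h, qn h = 1 /\ P (conjq h p) /\ P (conjq h q).
Proof.
move=> pn qn' GP hM hC h1; split.
- case=> g [sg hw]; have [h [hn eg]] := SU2_Qm _ sg; subst g.
  exists h; split => //; split.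
  + by have := hw wX; rewrite /= conjQm // GP // unit_conj.
  + by have := hw wY; rewrite /= conjQm // GP // unit_conj.
- case=> h [hn [hp' hq']]; exists (Qm h); split; first exact: SU2Qm.
  move=> w; rewrite rep_evalQ // conjQm // conjq_eval //.
  apply/GP; first by apply: qn_eval; apply: unit_conj.
  exact: class_all.
Qed.

Lemma Spin2Q' v : qn v = 1 -> Spin2 (Qm v) <-> SpinQ v.
Proof. by move=> hn; rewrite Spin2Q. Qed.

Lemma mainQ p q : qn p = 1 -> qn q = 1 ->
  ((exists h, qn h = 1 /\ PinQ (conjq h p) /\ PinQ (conjq h q)) /\
   ~ (exists h, qn h = 1 /\ SpinQ (conjq h p) /\ SpinQ (conjq h q))) <->
  (qa (comm p q) != 1 /\
  ((qa p == 0) && (qa q == 0) \/ (qa p == 0) && (qa (qmul p q) == 0) \/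
   (qa q == 0) && (qa (qmul p q) == 0))).
Proof.
move=> pn qn'; split; last by case=> hk hd; apply: bwd.
case=> [[h [hn [hp' hq']]] hns].
have := fwd (conjq h p) (conjq h q) (unit_conj h p hn pn) (unit_conj h q hn qn') hp' hq'.
rewrite -conjq_comm // -conjq_mul // !qa_conjq hn !mul1r; apply.
case=> r [rn [s1 s2]]; apply: hns; exists (qmul r h); split.
  by rewrite qnM rn hn mulr1.
by rewrite !conjq_comp.
Qed.

End Q.

Theorem proposition3p3 (R : realType) (A B : 'M[R[i]]_2) :
  SU2 A -> SU2 B ->
  let x := \tr A in
  let y := \tr B in
  let z := \tr (A *m B) in
  let k := \tr (rep_eval A B wK) in
  (rep_class_in (@Pin2 R) A B /\ ~ rep_class_in (@Spin2 R) A B) <->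
  (k != 2 /\ ((x == 0) && (y == 0) \/ (x == 0) && (z == 0) \/ (y == 0) && (z == 0))).
Proof.
move=> sA sB.
have [p [pn ->]] := SU2_Qm _ _ sA; have [q [qn' ->]] := SU2_Qm _ _ sB.
move=> x y z k; rewrite /x /y /z /k {x y z k}.
rewrite -QmM rep_evalQ // !trQm !trz trk.
rewrite (@classQ R (@Pin2 R) (@PinQ R) p q pn qn' (@Pin2Q R) (@PinM R) (@PinC R) (@Pin1 R)).
rewrite (@classQ R (@Spin2 R) (@SpinQ R) p q pn qn' (@Spin2Q' R) (@SpinM R) (@SpinC R) (@Spin1 R)).
exact: mainQ.
Qed.
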